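(* Let $A\in\mathbb{R}^{m\times n}$ with $n>m$, and let $A=U_A\Sigma_AV_A^T$ be its economy SVD, $V_A\in\mathbb{R}^{n\times m}$ with orthonormal columns. Let $\lambda>0$. Let $X\in\mathbb{R}^{n\times s}$ with $n>s>m$ be a matrix such that, for some $0<\epsilon<1$, $$1-\epsilon<\sigma_{\min}(X^TV_A)\le\sigma_{\max}(X^TV_A)<1+\epsilon .$$ Suppose $R\in\mathbb{R}^{m\times m}$ is an upper triangular matrix such that $R^TR=AXX^TA^T+\lambda I_m$. Then $$\kappa_2(R^{-T}D)\le\frac{1+\epsilon}{1-\epsilon},\qquad\text{where } D=\begin{bmatrix}A & \sqrt{\lambda}I_m\end{bmatrix}\in\mathbb{R}^{m\times(n+m)}.$$
   Context: $\sigma_{\min},\sigma_{\max}$ denote the smallest and largest singular values (of the $s\times m$ matrix $X^TV_A$, among its $m$ singular values), and $\kappa_2(M)=\sigma_{\max}(M)/\sigma_{\min}(M)$ is the spectral condition number of a full-row-rank matrix $M$ (ratio of largest to smallest of its $m$ singular values). Note $R$ is invertible since $R^TR$ is positive definite. *)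

(* Defs.v *)
From HB Require Import structures.
From mathcomp Require Import all_boot all_order all_algebra.
From mathcomp Require Import all_classical all_reals.
Set Implicit Arguments. Unset Strict Implicit. Unset Printing Implicit Defensive.
Import Order.TTheory GRing.Theory Num.Theory.
Local Open Scope ring_scope.
Local Open Scope classical_set_scope.

(* Singular values of a real p x q matrix M: there are min(p,q) of them,
   namely the square roots of the eigenvalues of the min(p,q) x min(p,q)
   Gram matrix (M^T M if q <= p, M M^T otherwise). *)
Definition sq_singvals (R : realType) (p q : nat) (M : 'M[R]_(p, q)) : set R :=
  if (q <= p)%N then [set a | eigenvalue (M^T *m M) a]
  else [set a | eigenvalue (M *m M^T) a].

Definition sigma_min (R : realType) (p q : nat) (M : 'M[R]_(p, q)) : R :=
  Num.sqrt (inf (sq_singvals M)).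

Definition sigma_max (R : realType) (p q : nat) (M : 'M[R]_(p, q)) : R :=
  Num.sqrt (sup (sq_singvals M)).

Definition kappa2 (R : realType) (p q : nat) (M : 'M[R]_(p, q)) : R :=
  sigma_max M / sigma_min M.

Definition upper_triangular (R : realType) (m : nat) (M : 'M[R]_m) : Prop :=
  forall i j : 'I_m, (j < i)%N -> M i j = 0.

(* Main.v *)
Require Import Defs.
From HB Require Import structures.
From mathcomp Require Import all_boot all_order all_algebra.
From mathcomp Require Import all_classical all_reals.
From mathcomp Require Import complex polyrcf ring lra.
Import Order.TTheory GRing.Theory Num.Theory.
Local Open Scope ring_scope.
Local Open Scope classical_set_scope.

Lemma sqn_ge0 (R : realFieldType) k (x : 'rV[R]_k) : 0 <= (x *m x^T) 0 0.
Proof. by rewrite mxE; apply: sumr_ge0 => i _; rewrite mxE -expr2 sqr_ge0. Qed.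

Lemma sqn_gt0 (R : realFieldType) k (x : 'rV[R]_k) : x != 0 -> 0 < (x *m x^T) 0 0.
Proof.
move=> x0; rewrite lt_def sqn_ge0 andbT; apply/negP => /eqP.
rewrite mxE => /psumr_eq0P H; apply/negP: x0; rewrite negbK.
have {}H := H (fun i _ => ltac:(by rewrite mxE -expr2 sqr_ge0)).
apply/eqP/matrixP => i j; rewrite ord1 !mxE.
by have := H j isT; rewrite mxE => /eqP; rewrite mulf_eq0 orbb => /eqP.
Qed.

Lemma eig_ub (R : realType) k (G : 'M[R]_k) :
  has_ubound [set a : R | eigenvalue G a].
Proof.
exists (cauchy_bound (char_poly G)) => x /=.
rewrite eigenvalue_root_char => /rootP Hx.
apply: le_trans (real_ler_norm (num_real x)) (ltW (cauchy_boundP _ Hx)).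
exact: monic_neq0 (char_poly_monic G).
Qed.

Local Open Scope sesquilinear_scope.
Section Ray.
Variable R : rcfType.
Local Notation C := (R[i]).
Local Notation f := (real_complex R).

Lemma conj_f (x : R) : (f x)^* = f x.
Proof. by apply/CrealP/complex_realP; exists x. Qed.

Lemma real_eig_of_C n (G : 'M[R]_n) (e : R) :
  eigenvalue (map_mx f G) (f e) -> eigenvalue G e.
Proof.
by rewrite !eigenvalue_root_char -map_char_poly fmorph_root.
Qed.

Lemma rayleigh n (G : 'M[R]_n) (lo hi : R) :
  G^T = G -> (forall a, eigenvalue G a -> lo <= a <= hi) ->
  forall y : 'rV[R]_n,
  lo * (y *m y^T) 0 0 <= (y *m G *m y^T) 0 0 <= hi * (y *m y^T) 0 0.
Proof.
move=> Gsym Heig y.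
pose GC := map_mx f G.
have GCh : GC \is hermsymmx.
  apply: realsym_hermsym.
    apply/is_hermitianmxP; rewrite expr0 scale1r map_mx_id //.
    by apply/matrixP => i j; rewrite !mxE; congr f; rewrite -{1}Gsym mxE.
  by apply/mxOverP => i j; rewrite mxE; apply/complex_realP; eexists.
have /hermitian_normalmx/orthomx_spectralP GCE := GCh.
have Dreal := hermitian_spectral_diag_real GCh.
set P := spectralmx GC in GCE; set D := spectral_diag GC in GCE Dreal.
have Pu : P \is unitarymx := spectral_unitarymx GC.
have Punit : P \in unitmx := unitarymx_unit Pu.
have invP : invmx P = P^t* := invmx_unitary Pu.
have Deig : forall i, exists2 e, D 0 i = f e & lo <= e <= hi.
  move=> i; have /complex_realP [e De] := mxOverP Dreal 0 i.
  exists e => //; apply: Heig; apply: real_eig_of_C; rewrite -De.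
  apply/eigenvalueP; exists (row i P).
    rewrite [X in _ *m X]GCE !mulmxA -row_mul mulmxV // row1.
    by rewrite -rowE row_diag_mx -scalemxAl -rowE.
  apply/negP => /eqP /(congr1 (mulmx^~ (invmx P))).
  rewrite -row_mul mulmxV // row1 mul0mx => /matrixP /(_ 0 i).
  by rewrite !mxE !eqxx /= => /eqP; rewrite oner_eq0.
pose yC := map_mx f y; pose w := yC *m P^t*.
have yCt : yC^t* = map_mx f y^T.
  by apply/matrixP => i j; rewrite !mxE conj_f.
have wt : w^t* = P *m yC^t*.
  by rewrite /w trmx_mul map_mxM trmxCK.
have E1 : f ((y *m G *m y^T) 0 0) = \sum_i D 0 i * (w 0 i * (w 0 i)^*).
  transitivity ((map_mx f (y *m G *m y^T)) 0 0); first by rewrite [RHS]mxE.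
  rewrite !map_mxM -yCt -/yC -/GC GCE invP.
  rewrite !mulmxA -/w -mulmxA -wt mul_mx_diag.
  rewrite mxE; apply: eq_bigr => j _; rewrite !mxE.
  by rewrite mulrAC mulrC.
have E2 : f ((y *m y^T) 0 0) = \sum_i (w 0 i * (w 0 i)^*).
  transitivity ((map_mx f (y *m y^T)) 0 0); first by rewrite [RHS]mxE.
  rewrite !map_mxM -yCt -/yC -{1}(mulmx1 yC) -(mulVmx Punit) invP.
  rewrite !mulmxA -/w -mulmxA -wt mxE; apply: eq_bigr => j _.
  by rewrite !mxE.
apply/andP; split; rewrite -lecR rmorphM /= E1 E2 mulr_sumr; apply: ler_sum => i _;
  have [e -> /andP [le1 le2]] := Deig i.
  by rewrite ler_wpM2r ?mul_conjC_ge0 // lecR.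
by rewrite ler_wpM2r ?mul_conjC_ge0 // lecR.
Qed.
End Ray.
Local Close Scope sesquilinear_scope.
Lemma ineq (R : realFieldType) (a p g q k1 k2 : R) : 0 < k1 -> k1 <= 1 -> 1 <= k2 ->
  0 <= p -> 0 < q -> k1 * p <= g -> g <= k2 * p -> a * (g + q) = p + q ->
  k2^-1 <= a <= k1^-1.
Proof.
move=> k1p k11 k21 p0 q0 g1 g2 E.
have k2p : 0 < k2 by apply: lt_le_trans k21.
have gq : 0 < g + q by nra.
apply/andP; split.
  rewrite -[k2^-1]mulr1 ler_pdivrMl //.
  rewrite -(ler_pM2r gq); nra.
rewrite -[k1^-1]mulr1 ler_pdivlMl //.
rewrite -(ler_pM2r gq); nra.
Qed.

Lemma quadC (R : realType) m n s (A : 'M[R]_(m, n)) (X : 'M[R]_(n, s)) lam (u : 'rV_m) :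
  (u *m (A *m X *m X^T *m A^T + lam%:M) *m u^T) 0 0 =
  ((u *m A *m X) *m (u *m A *m X)^T) 0 0 + lam * (u *m u^T) 0 0.
Proof.
rewrite mulmxDr mulmxDl mul_mx_scalar -scalemxAl [LHS]mxE [X in _ + X]mxE; congr (_ + _).
by rewrite !trmx_mul !mulmxA.
Qed.

Theorem lemma2p2 (R : realType) (m n s : nat)
  (A : 'M[R]_(m, n)) (U : 'M[R]_m) (d : 'rV[R]_m) (V : 'M[R]_(n, m))
  (lam eps : R) (X : 'M[R]_(n, s)) (Rm : 'M[R]_m) :
  (m < n)%N ->
  (* economy SVD  A = U diag(d) V^T *)
  U^T *m U = 1%:M ->
  (forall i : 'I_m, 0 <= d 0 i) ->
  (forall i j : 'I_m, (i <= j)%N -> d 0 j <= d 0 i) ->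
  V^T *m V = 1%:M ->
  A = U *m diag_mx d *m V^T ->
  0 < lam ->
  (s < n)%N -> (m < s)%N ->
  0 < eps -> eps < 1 ->
  1 - eps < sigma_min (X^T *m V) ->
  sigma_min (X^T *m V) <= sigma_max (X^T *m V) ->
  sigma_max (X^T *m V) < 1 + eps ->
  upper_triangular Rm ->
  Rm^T *m Rm = A *m X *m X^T *m A^T + lam%:M ->
  kappa2 ((invmx Rm)^T *m row_mx A (Num.sqrt lam)%:M) <= (1 + eps) / (1 - eps).
Proof.
move=> mn UU d0 dmon VV AE lam0 sn ms eps0 eps1 Hmin Hminmax Hmax Rtri RR.
set B := X^T *m V.
set G := B^T *m B.
have GE : G = V^T *m X *m X^T *m V by rewrite /G /B trmx_mul trmxK !mulmxA.
have SG : sq_singvals B = [set a : R | eigenvalue G a].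
  by rewrite /sq_singvals ifT // ltnW.
set lo := inf [set a : R | eigenvalue G a].
set hi := sup [set a : R | eigenvalue G a].
have k1p : 0 < 1 - eps by lra.
have lo_ge : (1 - eps)^+2 <= lo.
  move: Hmin; rewrite /sigma_min SG -/lo.
  case: (lerP ((1-eps)^+2) lo) => // H1 H2; exfalso.
  have : Num.sqrt lo <= 1 - eps.
    by rewrite -(ger0_norm (ltW k1p)) -sqrtr_sqr ler_sqrt ?sqr_ge0 // ltW.
  lra.
have hi_le : hi <= (1 + eps)^+2.
  move: Hmax; rewrite /sigma_max SG -/hi.
  case: (lerP hi ((1+eps)^+2)) => // H1 H2; exfalso.
  have : 1 + eps <= Num.sqrt hi.
    rewrite -(ger0_norm (_ : 0 <= 1 + eps)); last by lra.
    rewrite -sqrtr_sqr ler_sqrt ?ltW //.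
    by apply: le_lt_trans H1; apply: sqr_ge0.
  lra.
have Gsym : G^T = G by rewrite /G trmx_mul trmxK.
have eig_ge0 : forall a, eigenvalue G a -> 0 <= a.
  move=> a /eigenvalueP [v Hv v0].
  have : (v *m G *m v^T) 0 0 = a * (v *m v^T) 0 0.
    by rewrite Hv -scalemxAl mxE.
  rewrite /G mulmxA -[v *m B^T *m B *m v^T]mulmxA.
  rewrite (_ : B *m v^T = (v *m B^T)^T); last by rewrite trmx_mul trmxK.
  move=> E; have := @sqn_ge0 _ _ (v *m B^T); rewrite E pmulr_lge0 //.
  exact: sqn_gt0.
have Geig : forall a, eigenvalue G a -> (1 - eps)^+2 <= a <= (1 + eps)^+2.
  move=> a Ha; apply/andP; split.
    apply: le_trans lo_ge _; apply: ge_inf => //.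
    by exists 0 => x /= /eig_ge0.
  by apply: le_trans hi_le; apply: ub_le_sup => //; exact: eig_ub.
have Ray := @rayleigh _ _ _ _ _ Gsym Geig.
have Runit : Rm \in unitmx.
  rewrite -unitmx_tr -row_free_unit -kermx_eq0; apply/contraT => Hk.
  set w := nz_row (kermx Rm^T).
  have w0 : w != 0 by rewrite nz_row_eq0.
  have wR : w *m Rm^T = 0 by apply/sub_kermxP; exact: nz_row_sub.
  have := @quadC _ _ _ _ A X lam w; rewrite -RR mulmxA wR !mul0mx mxE.
  have := @sqn_ge0 _ _ (w *m A *m X); have := @sqn_gt0 _ _ w w0.
  set p := (_ *m _) 0 0; set q := (_ *m _) 0 0 => H1 H2 H3.
  suff : 0 < q + lam * p by rewrite -H3 ltxx.
  by apply: ltr_wpDl => //; apply: mulr_gt0.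
set M := (invmx Rm)^T *m row_mx A (Num.sqrt lam)%:M.
have MM : M *m M^T = (invmx Rm)^T *m (A *m A^T + lam%:M) *m invmx Rm.
  rewrite /M trmx_mul trmxK tr_row_mx tr_scalar_mx -!mulmxA; congr (_ *m _).
  by rewrite !mulmxA mul_row_col -scalar_mxM -expr2 sqr_sqrtr ?ltW.
have Meig : forall a, eigenvalue (M *m M^T) a ->
    ((1 + eps)^+2)^-1 <= a <= ((1 - eps)^+2)^-1.
  move=> a /eigenvalueP [v Hv v0].
  set u := v *m (invmx Rm)^T.
  have vu : v = u *m Rm^T.
    by rewrite /u -mulmxA -trmx_mul mulmxV // trmx1 mulmx1.
  have u0 : u != 0 by apply: contraNneq v0 => u0; rewrite vu u0 mul0mx.
  have h1 : (v *m (M *m M^T) *m v^T) 0 0 = a * (v *m v^T) 0 0.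
    by rewrite Hv -scalemxAl mxE.
  have h1' : (v *m (M *m M^T) *m v^T) 0 0 =
      (u *m (A *m A^T + lam%:M) *m u^T) 0 0.
    rewrite MM {1}vu !mulmxA -[u *m Rm^T *m _]mulmxA -trmx_mul mulVmx // trmx1 mulmx1.
    rewrite vu trmx_mul trmxK -[_ *m invmx Rm *m _]mulmxA [invmx Rm *m _]mulmxA.
    by rewrite mulVmx // mul1mx.
  have h2 : (v *m v^T) 0 0 = (u *m (A *m X *m X^T *m A^T + lam%:M) *m u^T) 0 0.
    by rewrite -RR vu trmx_mul trmxK !mulmxA.
  rewrite quadC in h2.
  rewrite mulmxDr mulmxDl mul_mx_scalar -scalemxAl [in RHS]mxE [X in _ + X]mxE in h1'.
  set yy := u *m U *m diag_mx d.
  have uA : u *m A = yy *m V^T by rewrite AE !mulmxA.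
  have e1 : (u *m (A *m A^T) *m u^T) 0 0 = (yy *m yy^T) 0 0.
    rewrite mulmxA -[u *m A *m A^T *m u^T]mulmxA -trmx_mul uA trmx_mul trmxK.
    by rewrite !mulmxA -[yy *m V^T *m V]mulmxA VV mulmx1.
  have e2 : ((u *m A *m X) *m (u *m A *m X)^T) 0 0 = (yy *m G *m yy^T) 0 0.
    by rewrite uA GE !trmx_mul !trmxK !mulmxA.
  rewrite e1 in h1'; rewrite e2 in h2.
  have [r1 r2] := andP (Ray yy).
  apply: (@ineq _ a _ _ (lam * (u *m u^T) 0 0) _ _ _ _ _ _ _ r1 r2).
  - by rewrite exprn_gt0.
  - rewrite expr2; nra.
  - rewrite expr2; nra.
  - exact: sqn_ge0.
  - by rewrite mulr_gt0 // sqn_gt0.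
  by rewrite -h2 -h1' h1.
have SM : sq_singvals M = [set a | eigenvalue (M *m M^T) a].
  rewrite /sq_singvals ifF //; apply/negbTE; rewrite -ltnNge.
  by rewrite -{1}[m]add0n ltn_add2r (leq_ltn_trans (leq0n m) mn).
rewrite /kappa2 /sigma_max /sigma_min SM.
set S := [set a | eigenvalue (M *m M^T) a].
have [[x Sx]|S0] := pselect (exists x, S x); last first.
  rewrite (_ : S = set0); last first.
    by apply/seteqP; split => y // Sy; apply: S0; exists y.
  rewrite sup0 inf0 sqrtr0 mul0r divr_ge0 //; lra.
have k1p' : 0 < (1 - eps)^-1 by rewrite invr_gt0.
have k2p' : 0 < (1 + eps)^-1 by rewrite invr_gt0; lra.
have supS : sup S <= ((1 - eps)^+2)^-1.
  apply: ge_sup; first by exists x.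
  by move=> y /Meig /andP[].
have infS : ((1 + eps)^+2)^-1 <= inf S.
  apply: lb_le_inf; first by exists x.
  by move=> y /Meig /andP[].
have sq1 : Num.sqrt (sup S) <= (1 - eps)^-1.
  rewrite -(ger0_norm (ltW k1p')) -sqrtr_sqr ler_sqrt ?sqr_ge0 //.
  by rewrite exprVn.
have sq2 : (1 + eps)^-1 <= Num.sqrt (inf S).
  rewrite -(ger0_norm (ltW k2p')) -sqrtr_sqr ler_sqrt ?exprVn //.
  by apply: le_trans infS; rewrite -exprVn sqr_ge0.
have sp : 0 < Num.sqrt (inf S) by apply: lt_le_trans sq2.
rewrite (_ : (1 + eps) / (1 - eps) = (1 - eps)^-1 / (1 + eps)^-1); last first.
  by rewrite invrK mulrC.
apply: ler_pM => //.
- exact: sqrtr_ge0.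
- by rewrite invr_ge0 sqrtr_ge0.
- by rewrite lef_pV2 // posrE.
Qed.
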